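(* For all $l=1,\ldots,n-3$ and $m,s=1,\ldots,N$, the operator-valued monodromy matrix $\hat M_{[k]}$ satisfies \[ \nabla_{\boldsymbol\sigma_l,m} \nabla_{\boldsymbol\sigma_l,s}^{-1} \hat M_{[k]} = \hat M_{[k]} \nabla_{\boldsymbol\sigma_l,m} \nabla_{\boldsymbol\sigma_l,s}^{-1} \,. \] Equivalently, $\hat M_{[k]}$ is invariant under shifts of any $\boldsymbol\sigma_l$ by vectors of the root lattice of $\mathfrak{sl}_N$ (vectors in $\mathbb Z^N$ with vanishing sum of components).
   Context: Setting: $W_N$-algebra with central charge $c=N-1$; semi-degenerate conformal blocks on the sphere with generic punctures at $z_0=0$ (weight $\boldsymbol\theta_0$) and $z_{n-1}=\infty$ (weight $\boldsymbol\theta_{n-1}$), semi-degenerate fields $V_{a_k}(z_k)$ with weights $a_k\boldsymbol h_1$ at $z_1,\ldots,z_{n-2}$, and intermediate weights $\boldsymbol\sigma_1,\ldots,\boldsymbol\sigma_{n-3}\in\mathbb C^N$ (components summing to zero). Here $\boldsymbol h_s$ has components $h_s^{(k)}=\delta_{sk}-1/N$. The fusion matrix is $F_{lj}(\boldsymbol\sigma',a,\boldsymbol\sigma)=\prod_{k\ne l}\frac{\sin\pi((a+1)/N+\sigma'^{(j)}-\sigma^{(k)})}{\sin\pi(\sigma^{(k)}-\sigma^{(l)})}$, with inverse $F^{-1}(\boldsymbol\sigma',a,\boldsymbol\sigma)=F(-\boldsymbol\sigma,a,-\boldsymbol\sigma')$. The braiding matrix is $B(\boldsymbol\sigma)=\operatorname{diag}(e^{i\pi\sigma^{(1)}},\ldots,e^{i\pi\sigma^{(N)}})$.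 The shift operator $\nabla_{\boldsymbol\sigma,s}$ acts on functions of $\boldsymbol\sigma$ by $\nabla_{\boldsymbol\sigma,s}\mathcal F(\boldsymbol\sigma)=\mathcal F(\boldsymbol\sigma+\boldsymbol h_s)$, and $\nabla_{\boldsymbol\sigma}=\operatorname{diag}(\nabla_{\boldsymbol\sigma,1},\ldots,\nabla_{\boldsymbol\sigma,N})$. Define \[ \hat V_{[k]} = B(-\boldsymbol{\theta}_{n-1}) F^{-1}(-\boldsymbol{\theta}_{n-1},a_{n-2}-1,\boldsymbol{\sigma}_{n-3}) \nabla_{\boldsymbol{\sigma}_{n-3}} F^{-1}(\boldsymbol{\sigma}_{n-3},a_{n-3},\boldsymbol{\sigma}_{n-4}) \nabla_{\boldsymbol{\sigma}_{n-4}} \cdots \nabla_{\boldsymbol{\sigma}_{k+1}} F^{-1}(\boldsymbol{\sigma}_{k+1},a_{k+1},\boldsymbol{\sigma}_{k}), \] and $\hat M_{[k]}=\hat V_{[k]}B^2(\boldsymbol\sigma_k)\hat V_{[k]}^{-1}$. This $\hat M_{[k]}$ is the operator-valued monodromy of the column of conformal blocks $\mathcal F_m(\boldsymbol\sigma|y)=C_m\langle -\boldsymbol\theta_{n-1}+\boldsymbol h_m|\Psi(y)V_{a_{n-2}}(z_{n-2})\mathcal P_{\boldsymbol\sigma_{n-3}}\cdots\mathcal P_{\boldsymbol\sigma_1}V_{a_1}(z_1)|\boldsymbol\theta_0\rangle$ (with $\Psi(y)$ the column of degenerate fields $\psi_j(y)$, $C_m=\operatorname{diag}((-1)^{N\delta_{jm}})$)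 under analytic continuation in $y$ along the loop encircling $z_0,\ldots,z_k$. *)

(* Defs.v *)
From HB Require Import structures.
From mathcomp Require Import all_boot all_order all_algebra.
From mathcomp Require Import all_classical all_reals.
From mathcomp Require Import sequences exp trigo.
From mathcomp Require Import complex.
Set Implicit Arguments. Unset Strict Implicit. Unset Printing Implicit Defensive.
Import Order.TTheory GRing.Theory Num.Theory.
Local Open Scope ring_scope.
Local Open Scope complex_scope.

Section Defs.
Variable R : realType.
Local Notation C := R[i].

Definition cexp (z : C) : C :=
  (expR (complex.Re z))%:C * ((cos (complex.Im z)) +i* (sin (complex.Im z))).
Definition csin (z : C) : C := (cexp ('i * z) - cexp (- ('i * z))) / (2%:R * 'i).
Definition cpi : C := (pi : R)%:C.

Variable N : nat.
Definition vec := 'I_N -> C.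
Definition hvec (s : 'I_N) : vec := fun c => (c == s)%:R - (N%:R)^-1.

Definition Fmat (sp : vec) (a : C) (sg : vec) : 'M[C]_N :=
  \matrix_(l, j) \prod_(k < N | k != l)
     (csin (cpi * ((a + 1) / N%:R + sp j - sg k)) / csin (cpi * (sg k - sg l))).
Definition Finv (sp : vec) (a : C) (sg : vec) : 'M[C]_N :=
  Fmat (fun c => - sg c) a (fun c => - sp c).
Definition Bmat (sg : vec) : 'M[C]_N :=
  \matrix_(i, j) ((i == j)%:R * cexp ('i * cpi * sg i)).
Definition vopp (v : vec) : vec := fun c => - v c.

(** configurations (σ_j)_j ; only indices 1..n-3 are meaningful *)
Definition conf := nat -> vec.
Definition shiftc (sg : conf) (j : nat) (v : vec) : conf :=
  fun i => if i == j then (fun c => sg i c + v c) else sg i.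

Definition fn := conf -> C.
Definition nabla (j : nat) (s : 'I_N) (f : fn) : fn := fun sg => f (shiftc sg j (hvec s)).
Definition nablaV (j : nat) (s : 'I_N) (f : fn) : fn :=
  fun sg => f (shiftc sg j (vopp (hvec s))).

(** columns of functions and operator-valued N x N matrices acting on them *)
Definition colfn := 'I_N -> fn.
Definition op := colfn -> colfn.
Definition mulop (A : conf -> 'M[C]_N) : op :=
  fun G i sg => \sum_(j < N) A sg i j * G j sg.
Definition nablaM (j : nat) : op := fun G i => nabla j i (G i).
Definition nablaMV (j : nat) : op := fun G i => nablaV j i (G i).
Definition Tshift (l : nat) (m s : 'I_N) : op := fun G i => nabla l m (nablaV l s (G i)).

Variables (n : nat) (theta : vec) (a : nat -> C) (k : nat).

(** tail d = ∇_{σ_{k+d}} F^{-1}(σ_{k+d},a_{k+d},σ_{k+d-1}) ... ∇_{σ_{k+1}} F^{-1}(σ_{k+1},a_{k+1},σ_k) *)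
Fixpoint Vtail (d : nat) : op :=
  match d with
  | 0 => id
  | d'.+1 => fun G => nablaM (k + d'.+1)
       (mulop (fun sg => Finv (sg (k + d'.+1)) (a (k + d'.+1)) (sg (k + d'))) (Vtail d' G))
  end.
(** its inverse, using (F^{-1})^{-1} = F and ∇^{-1} *)
Fixpoint VtailV (d : nat) : op :=
  match d with
  | 0 => id
  | d'.+1 => fun G => VtailV d'
       (mulop (fun sg => Fmat (sg (k + d'.+1)) (a (k + d'.+1)) (sg (k + d')))
          (nablaMV (k + d'.+1) G))
  end.

Definition Vhat : op := fun G =>
  mulop (fun _ => Bmat (vopp theta))
    (mulop (fun sg => Finv (vopp theta) (a (n - 2)%N - 1) (sg (n - 3)%N))
       (Vtail (n - 3 - k) G)).
Definition VhatV : op := fun G =>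
  VtailV (n - 3 - k)
    (mulop (fun sg => Fmat (vopp theta) (a (n - 2)%N - 1) (sg (n - 3)%N))
       (mulop (fun _ => Bmat theta) G)).
Definition Mhat : op := fun G =>
  Vhat (mulop (fun sg => Bmat (sg k) *m Bmat (sg k)) (VhatV G)).
End Defs.

(* Main.v *)
Require Import Defs.
From HB Require Import structures.
From mathcomp Require Import all_boot all_order all_algebra.
From mathcomp Require Import all_classical all_reals.
From mathcomp Require Import sequences exp trigo.
From mathcomp Require Import complex.
From mathcomp Require Import ring.
Import Order.TTheory GRing.Theory Num.Theory.
Local Open Scope ring_scope.
Local Open Scope complex_scope.
Set Implicit Arguments. Unset Strict Implicit.
Section S.
Variable R : realType.
Lemma cexpD (z w : R[i]) : cexp (z + w) = cexp z * cexp w.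
Proof.
case: z => a b; case: w => c d; rewrite /cexp /=.
rewrite expRD cosD sinD.
apply/eqP; rewrite eq_complex /=; apply/andP; split; apply/eqP; ring.
Qed.
Lemma cexp_ipi : cexp ('i * cpi R) = -1 :> R[i].
Proof. rewrite /cexp /cpi /= !(mul0r, mul1r, mulr0, subrr, add0r, oppr0, subr0, addr0) ?cosN ?sinN cospi sinpi expR0.
apply/eqP; rewrite eq_complex /=; apply/andP; split; apply/eqP; ring. Qed.
Lemma cexp_mipi : cexp (-('i * cpi R)) = -1 :> R[i].
Proof. rewrite /cexp /cpi /= !(mul0r, mul1r, mulr0, subrr, add0r, oppr0, subr0, addr0) ?cosN ?sinN cospi sinpi expR0.
apply/eqP; rewrite eq_complex /=; apply/andP; split; apply/eqP; ring. Qed.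
Lemma cexp_shift (z : R[i]) (b1 b2 : bool) :
  cexp (z + 'i * cpi R * (b1%:R - b2%:R)) = (-1)^+(b1 + b2) * cexp z.
Proof.
case: b1; case: b2 => /=.
- by rewrite subrr mulr0 addr0 expr2 mulN1r opprK mul1r.
- rewrite subr0 mulr1 cexpD cexp_ipi expr1; by rewrite mulrC.
- rewrite sub0r mulrN mulr1 cexpD cexp_mipi expr1; by rewrite mulrC.
- by rewrite subrr mulr0 addr0 expr0 mul1r.
Qed.
Lemma csin_shift (z : R[i]) (b1 b2 : bool) :
  csin (z + cpi R * (b1%:R - b2%:R)) = (-1)^+(b1 + b2) * csin z.
Proof.
rewrite /csin.
have -> : 'i * (z + cpi R * (b1%:R - b2%:R)) = 'i * z + 'i * cpi R * (b1%:R - b2%:R) by ring.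
have -> : -('i * z + 'i * cpi R * (b1%:R - b2%:R)) = -('i * z) + 'i * cpi R * (b2%:R - b1%:R) by ring.
by rewrite !cexp_shift [(b2 + b1)%N]addnC -mulrBr mulrA.
Qed.
End S.

Section FM.
Variables (R : realType) (N : nat) (e : 'I_N -> R[i]) (He : forall c, e c * e c = 1).
Local Notation C := R[i].
Definition vadd (v d : vec R N) : vec R N := fun c => v c + d c.
Definition sc (b : bool) (c : 'I_N) : C := if b then e c ^+ N.-1 else 1.
Lemma sc2 b c : sc b c * sc b c = 1.
Proof. by case: b; rewrite /sc ?mulr1 // -exprMn He expr1n. Qed.
Lemma einv c : (e c)^-1 = e c.
Proof.
have ne0 : e c != 0 by apply/eqP => h; have := He c; rewrite h mul0r => /eqP; rewrite eq_sym oner_eq0.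
by apply: (mulfI ne0); rewrite mulfV // He.
Qed.
Lemma prod_neq (x : C) (l : 'I_N) : \prod_(k < N | k != l) x = x ^+ N.-1.
Proof. by rewrite prodr_const cardC1 card_ord. Qed.
Lemma alg1 (x y A B : C) : x * x = 1 -> x * A * (y * (x * B)) = y * (A * B).
Proof. move=> h; transitivity ((x * x) * (y * (A * B))); first by ring. by rewrite h mul1r. Qed.

Section D.
Variable d : vec R N.
Hypothesis Hd : forall z c, csin (z + cpi R * d c) = e c * csin z.
Lemma Hm z c : csin (z - cpi R * d c) = e c * csin z.
Proof. by rewrite -{2}(subrK (cpi R * d c) z) Hd mulrA He mul1r. Qed.
Lemma HdN z c : csin (z + cpi R * vopp d c) = e c * csin z.
Proof. by rewrite /vopp mulrN Hm. Qed.
Lemma Fmat_sg sp a sg i j : Fmat sp a (vadd sg d) i j = e i ^+ N.-1 * Fmat sp a sg i j.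
Proof.
rewrite !mxE -(prod_neq _ i) -big_split /=; apply: eq_bigr => k _.
rewrite /vadd.
have E1 u v : cpi R * (u - (v + d k)) = cpi R * (u - v) - cpi R * d k by ring.
have E2 : cpi R * (sg k + d k - (sg i + d i)) = (cpi R * (sg k - sg i) + cpi R * d k) - cpi R * d i by ring.
by rewrite E1 E2 Hm Hm Hd !invfM !einv alg1.
Qed.
Lemma Fmat_sp sp a sg i j : Fmat (vadd sp d) a sg i j = e j ^+ N.-1 * Fmat sp a sg i j.
Proof.
rewrite !mxE -(prod_neq _ i) -big_split /=; apply: eq_bigr => k _.
rewrite /vadd.
have E1 u v w : cpi R * (u + (v + d j) - w) = cpi R * (u + v - w) + cpi R * d j by ring.
by rewrite E1 Hd -mulrA.
Qed.
Lemma Fmat_shb (b1 b2 : bool) sp a sg i j :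
  Fmat (if b1 then vadd sp d else sp) a (if b2 then vadd sg d else sg) i j
  = sc b2 i * Fmat sp a sg i j * sc b1 j.
Proof.
rewrite /sc; case: b1; case: b2.
- by rewrite Fmat_sg Fmat_sp mulrA mulrAC.
- by rewrite Fmat_sp mul1r mulrC.
- by rewrite Fmat_sg mulr1.
- by rewrite mul1r mulr1.
Qed.
End D.
Lemma vopp_vadd v d : vopp (vadd v d) = vadd (vopp v) (vopp d).
Proof. by apply: funext => c; rewrite /vopp /vadd opprD. Qed.
Lemma Finv_shb d (Hd : forall z c, csin (z + cpi R * d c) = e c * csin z) (b1 b2 : bool) sp a sg i j :
  Finv (if b1 then vadd sp d else sp) a (if b2 then vadd sg d else sg) i j
  = sc b1 i * Finv sp a sg i j * sc b2 j.
Proof.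
rewrite /Finv.
have E v : (fun c => - vadd v d c) = vadd (vopp v) (vopp d) := vopp_vadd v d.
case: b1; case: b2; rewrite ?E.
- exact: (@Fmat_shb (vopp d) (HdN Hd) true true (vopp sg) a (vopp sp) i j).
- exact: (@Fmat_shb (vopp d) (HdN Hd) false true (vopp sg) a (vopp sp) i j).
- exact: (@Fmat_shb (vopp d) (HdN Hd) true false (vopp sg) a (vopp sp) i j).
- exact: (@Fmat_shb (vopp d) (HdN Hd) false false (vopp sg) a (vopp sp) i j).
Qed.
End FM.

Section Main.
Variables (R : realType) (N : nat) (l : nat) (m s : 'I_N).
Local Notation C := R[i].
Definition dd : vec R N := fun c => hvec R m c + vopp (hvec R s) c.
Definition ee (c : 'I_N) : C := (-1)^+((c == m) + (c == s)).
Lemma dd_E c : dd c = (c == m)%:R - (c == s)%:R.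
Proof. rewrite /dd /vopp /hvec; ring. Qed.
Lemma ee2 c : ee c * ee c = 1.
Proof. by rewrite /ee -expr2 sqrr_sign. Qed.
Lemma Hdd z c : csin (z + cpi R * dd c) = ee c * csin z.
Proof. by rewrite dd_E csin_shift. Qed.
Lemma cexp_dd c w : cexp ('i * cpi R * (w + dd c)) = ee c * cexp ('i * cpi R * w).
Proof. by rewrite mulrDr dd_E cexp_shift. Qed.

Local Notation scb := (sc ee).
Definition Tm (sg : conf R N) : conf R N := shiftc (shiftc sg l (hvec R m)) l (vopp (hvec R s)).
Definition TS (G : colfn R N) : colfn R N := fun i sg => G i (Tm sg).
Definition Dop (f : 'I_N -> C) (G : colfn R N) : colfn R N := fun i sg => f i * G i sg.

Lemma Tsg sg x : Tm sg x = if x == l then vadd (sg x) dd else sg x.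
Proof.
rewrite /Tm /shiftc; case: (x == l) => //; apply: funext => c.
rewrite /vadd /dd /=. symmetry. exact: addrA.
Qed.
Lemma Tm_shift sg j v : Tm (shiftc sg j v) = shiftc (Tm sg) j v.
Proof.
rewrite /Tm /shiftc; apply: funext => x; case: (x == l); case: (x == j) => //.
apply: funext => c; ring.
Qed.
Lemma TS_nablaM j G : TS (nablaM j G) = nablaM j (TS G).
Proof. by apply: funext => i; apply: funext => sg; rewrite /TS /nablaM /nabla Tm_shift. Qed.
Lemma TS_nablaMV j G : TS (nablaMV j G) = nablaMV j (TS G).
Proof. by apply: funext => i; apply: funext => sg; rewrite /TS /nablaMV /nablaV Tm_shift. Qed.
Lemma TS_mulop A G : TS (mulop A G) = mulop (fun sg => A (Tm sg)) (TS G).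
Proof. by []. Qed.
Lemma TS_mulopC (M : 'M[C]_N) G : TS (mulop (fun _ => M) G) = mulop (fun _ => M) (TS G).
Proof. by []. Qed.
Lemma Dop_nablaM f j G : nablaM j (Dop f G) = Dop f (nablaM j G).
Proof. by []. Qed.
Lemma Dop_nablaMV f j G : nablaMV j (Dop f G) = Dop f (nablaMV j G).
Proof. by []. Qed.
Lemma DopK f G : (forall i, f i * f i = 1) -> Dop f (Dop f G) = G.
Proof. by move=> h; apply: funext => i; apply: funext => sg; rewrite /Dop mulrA h mul1r. Qed.

Lemma L1 (A A' : conf R N -> 'M[C]_N) f g G :
  (forall sg i j, A' sg i j = f i * A sg i j * g j) -> (forall j, g j * g j = 1) ->
  mulop A' (Dop g G) = Dop f (mulop A G).
Proof.
move=> HA Hg; apply: funext => i; apply: funext => sg.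
rewrite /mulop /Dop big_distrr; apply: eq_bigr => j _ /=; rewrite HA.
transitivity (f i * A sg i j * (g j * g j) * G j sg); first by ring.
by rewrite Hg mulr1 mulrA.
Qed.
Lemma L2 (A A' : conf R N -> 'M[C]_N) f g G :
  (forall sg i j, A' sg i j = f i * A sg i j * g j) -> (forall i, f i * f i = 1) ->
  Dop f (mulop A' G) = mulop A (Dop g G).
Proof.
move=> HA Hf; apply: funext => i; apply: funext => sg.
rewrite /mulop /Dop big_distrr; apply: eq_bigr => j _ /=; rewrite HA.
transitivity ((f i * f i) * A sg i j * (g j * G j sg)); first by ring.
by rewrite Hf mul1r.
Qed.

Lemma Finv_T sg x y a' i j :
  Finv (Tm sg x) a' (Tm sg y) i j = scb (x == l) i * Finv (sg x) a' (sg y) i j * scb (y == l) j.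
Proof. rewrite !Tsg; exact: (Finv_shb ee2 Hdd). Qed.
Lemma Fmat_T sg x y a' i j :
  Fmat (Tm sg x) a' (Tm sg y) i j = scb (y == l) i * Fmat (sg x) a' (sg y) i j * scb (x == l) j.
Proof. rewrite !Tsg; exact: (Fmat_shb ee2 Hdd). Qed.
Lemma FinvC_T sg v y a' i j :
  Finv v a' (Tm sg y) i j = 1 * Finv v a' (sg y) i j * scb (y == l) j.
Proof. rewrite !Tsg; exact: (Finv_shb ee2 Hdd false). Qed.
Lemma FmatC_T sg v y a' i j :
  Fmat v a' (Tm sg y) i j = scb (y == l) i * Fmat v a' (sg y) i j * 1.
Proof. rewrite !Tsg; exact: (Fmat_shb ee2 Hdd false). Qed.

Variables (n : nat) (theta : vec R N) (a : nat -> C) (k : nat).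

Lemma Vtail_S d (G : colfn R N) : Vtail a k d.+1 G =
  nablaM (k + d.+1) (mulop (fun sg => Finv (sg (k + d.+1)) (a (k + d.+1)) (sg (k + d))) (Vtail a k d G)).
Proof. by []. Qed.
Lemma VtailV_S d (G : colfn R N) : VtailV a k d.+1 G =
  VtailV a k d (mulop (fun sg => Fmat (sg (k + d.+1)) (a (k + d.+1)) (sg (k + d))) (nablaMV (k + d.+1) G)).
Proof. by []. Qed.

Lemma VtailT d (G : colfn R N) : TS (Vtail a k d G) = Dop (scb ((k + d)%N == l)) (Vtail a k d (Dop (scb (k == l)) (TS G))).
Proof.
elim: d G => [|d IH] G.
  by rewrite /= addn0 DopK // => i; apply: (sc2 ee2).
rewrite Vtail_S TS_nablaM TS_mulop IH.
rewrite (@L1 (fun sg => Finv (sg (k + d.+1)) (a (k + d.+1)) (sg (k + d))) _ (scb ((k + d.+1)%N == l)) (scb ((k + d)%N == l))).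
- by rewrite Vtail_S Dop_nablaM.
- by move=> sg i j; rewrite Finv_T.
- by move=> j; exact: (sc2 ee2).
Qed.

Lemma VtailVT d (G : colfn R N) : TS (VtailV a k d G) = Dop (scb (k == l)) (VtailV a k d (Dop (scb ((k + d)%N == l)) (TS G))).
Proof.
elim: d G => [|d IH] G.
  by rewrite /= addn0 DopK // => i; apply: (sc2 ee2).
rewrite VtailV_S IH TS_mulop TS_nablaMV.
rewrite (@L2 (fun sg => Fmat (sg (k + d.+1)) (a (k + d.+1)) (sg (k + d))) _ (scb ((k + d)%N == l)) (scb ((k + d.+1)%N == l))).
- by rewrite VtailV_S Dop_nablaMV.
- by move=> sg i j; rewrite Fmat_T.
- by move=> j; exact: (sc2 ee2).
Qed.

Lemma Dop1 G : Dop (fun _ => 1) G = G.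
Proof. by apply: funext => i; apply: funext => sg; rewrite /Dop mul1r. Qed.
Hypothesis hk' : (k <= n - 3)%N.

Lemma VhatT (G : colfn R N) : TS (Vhat n theta a k G) = Vhat n theta a k (Dop (scb (k == l)) (TS G)).
Proof.
rewrite /Vhat TS_mulopC TS_mulop VtailT (subnKC hk').
rewrite (@L1 (fun sg => Finv (vopp theta) (a (n - 2)%N - 1) (sg (n - 3)%N)) _ (fun _ => 1) (scb ((n - 3)%N == l))).
- by rewrite Dop1.
- by move=> sg i j; rewrite FinvC_T.
- by move=> j; exact: (sc2 ee2).
Qed.

Lemma VhatVT (G : colfn R N) : TS (VhatV n theta a k G) = Dop (scb (k == l)) (VhatV n theta a k (TS G)).
Proof.
rewrite /VhatV VtailVT (subnKC hk') TS_mulop TS_mulopC.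
rewrite (@L2 (fun sg => Fmat (vopp theta) (a (n - 2)%N - 1) (sg (n - 3)%N)) _ (scb ((n - 3)%N == l)) (fun _ => 1)).
- by rewrite Dop1.
- by move=> sg i j; rewrite FmatC_T.
- by move=> j; exact: (sc2 ee2).
Qed.

Lemma alg2 (E P : C) M : E * E = 1 -> 1 * (E * P) * (1 * (E * P)) = E ^+ M * (1 * P * (1 * P)) * E ^+ M.
Proof.
move=> h; transitivity ((E * E) * (P * P)); first by ring.
transitivity ((E ^+ M * E ^+ M) * (P * P)); last by ring.
by rewrite -exprMn h expr1n.
Qed.

Lemma B2_T sg i j : (Bmat (Tm sg k) *m Bmat (Tm sg k)) i j
  = scb (k == l) i * (Bmat (sg k) *m Bmat (sg k)) i j * scb (k == l) j.
Proof.
rewrite Tsg; case: (k == l); last by rewrite /sc mul1r mulr1.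
rewrite /sc !mxE big_distrr big_distrl /=; apply: eq_bigr => x _; rewrite !mxE /vadd /=.
rewrite !cexp_dd.
case: eqP => [<-|_]; last by rewrite /= !(mul0r, mulr0).
case: eqP => [<-|_]; last by rewrite /= !(mul0r, mulr0).
exact: (alg2 _ _ (ee2 i)).
Qed.

Lemma MhatT (G : colfn R N) : TS (Mhat n theta a k G) = Mhat n theta a k (TS G).
Proof.
rewrite /Mhat VhatT TS_mulop VhatVT.
rewrite (@L2 (fun sg => Bmat (sg k) *m Bmat (sg k)) _ (scb (k == l)) (scb (k == l))).
- by rewrite DopK // => i; exact: (sc2 ee2).
- by move=> sg i j; rewrite B2_T.
- by move=> j; exact: (sc2 ee2).
Qed.
End Main.

Unset Implicit Arguments. Set Strict Implicit.
Local Close Scope complex_scope.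

Theorem proposition4p4 (R : realType) (N n : nat) (hN : (2 <= N)%N) (theta : vec R N)
    (a : nat -> R[i]) (k : nat) (hk : (1 <= k <= n - 3)%N)
    (l : nat) (hl : (1 <= l <= n - 3)%N) (m s : 'I_N)
    (G : colfn R N) (sg : conf R N)
    (hsg : forall j, (1 <= j <= n - 3)%N -> \sum_(c < N) sg j c = 0) :
  forall i : 'I_N,
    Tshift l m s (Mhat n theta a k G) i sg = Mhat n theta a k (Tshift l m s G) i sg.
Proof.
move=> i.
have hk' : (k <= n - 3)%N by case/andP: hk.
change (TS l m s (Mhat n theta a k G) i sg = Mhat n theta a k (TS l m s G) i sg).
by rewrite MhatT.
Qed.
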